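(* Let $f$ be a convex function on $[0,\infty)$ with $f(1)=1$ such that $g(x)=x^2f''(x)$ satisfies $g\ge0$ and $x^2g''(x)-g(\alpha)g(x/\alpha)\le0$ for all $x\ge0$, $\alpha>0$. Assume furthermore that $f(x)\ge c x^s$ for all $x\ge0$, for some $c>0$ and $s>1$. Then for all distributions $p_X\ll q_X$ on a finite set, $$D_{\mathrm{KL}}(p_X\|q_X)\le \frac{\log\big(1+D_{\hat f}(p_X\|q_X)\big)}{s-1},\qquad \hat f=f-1,$$ equivalently $\sum_x q_X(x) f\big(p_X(x)/q_X(x)\big)\ge e^{(s-1)D_{\mathrm{KL}}(p_X\|q_X)}$.
   Context: For distributions $p\ll q$ on a finite set and a function $h$ on $[0,\infty)$, $D_h(p\|q)=\sum_x q(x)h(p(x)/q(x))$ with $0h(0/0)=0$. $D_{\mathrm{KL}}$ is the Kullback–Leibler divergence (natural logarithm). *)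

(* Defs.v *)
From mathcomp Require Import all_boot all_order all_algebra.
From mathcomp Require Import all_classical all_reals all_analysis.
Set Implicit Arguments. Unset Strict Implicit. Unset Printing Implicit Defensive.
Import Order.TTheory GRing.Theory Num.Theory.
Local Open Scope ring_scope.

Definition convex_nonneg (R : realType) (f : R -> R) : Prop :=
  forall x y t : R, 0 <= x -> 0 <= y -> 0 <= t -> t <= 1 ->
    f (t * x + (1 - t) * y) <= t * f x + (1 - t) * f y.

Definition is_distr (R : realType) (T : finType) (p : T -> R) : Prop :=
  (forall x, 0 <= p x) /\ \sum_(x : T) p x = 1.

Definition abs_cont (R : realType) (T : finType) (p q : T -> R) : Prop :=
  forall x, q x = 0 -> p x = 0.

(* D_h(p||q) = sum_x q(x) h(p(x)/q(x)), with the convention 0 h(0/0) = 0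
   (terms with q(x) = 0 are dropped; they have p(x) = 0 when p << q). *)
Definition fdiv (R : realType) (T : finType) (h : R -> R) (p q : T -> R) : R :=
  \sum_(x : T | q x != 0) q x * h (p x / q x).

Definition KL (R : realType) (T : finType) (p q : T -> R) : R :=
  \sum_(x : T | p x != 0) p x * ln (p x / q x).

Definition gfun (R : realType) (f : R -> R) (x : R) : R :=
  x ^+ 2 * derive1 (derive1 f) x.

(* Main.v *)
Require Import Defs.
From mathcomp Require Import all_boot all_order all_algebra.
From mathcomp Require Import all_classical all_reals all_analysis.
From mathcomp Require Import ring lra.
Set Implicit Arguments. Unset Strict Implicit. Unset Printing Implicit Defensive.
Import Order.TTheory GRing.Theory Num.Theory.
Import numFieldNormedType.Exports.
Local Open Scope ring_scope.
Local Open Scope classical_set_scope.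

Lemma itv_oo_l (R : realType) (a b x : R) : x \in `]a, b[%R -> a < x.
Proof. by rewrite in_itv /= => /andP[]. Qed.
Lemma itv_oo_r (R : realType) (a b x : R) : x \in `]a, b[%R -> x < b.
Proof. by rewrite in_itv /= => /andP[]. Qed.
Lemma itv_cc_l (R : realType) (a b x : R) : x \in `[a, b]%R -> a <= x.
Proof. by rewrite in_itv /= => /andP[]. Qed.
Lemma itv_cc_r (R : realType) (a b x : R) : x \in `[a, b]%R -> x <= b.
Proof. by rewrite in_itv /= => /andP[]. Qed.

Lemma L2 (R : realType) (phi d1 d2 : R -> R) :
  (forall x : R, 0 < x -> is_derive x 1 phi (d1 x)) ->
  (forall x : R, 0 < x -> is_derive x 1 d1 (d2 x)) ->
  (forall x : R, 0 < x -> 0 <= d2 x) ->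
  forall u, 0 < u -> phi 1 + d1 1 * (u - 1) <= phi u.
Proof.
move=> Hp Hd Hd2.
have cont : forall (h dh : R -> R) (a b : R), 0 < a ->
   (forall x : R, 0 < x -> is_derive x 1 h (dh x)) -> {within `[a, b], continuous h}.
  move=> h dh a b a0 Hh; apply: derivable_within_continuous => x.
  rewrite in_itv /= => /andP[ax _]; have x0 : 0 < x by apply: lt_le_trans ax.
  exact: (@ex_derive _ _ _ _ _ _ _ (Hh x x0)).
have mono : forall a b, 0 < a -> a <= b -> d1 a <= d1 b.
  move=> a b a0 ab.
  have [c cab E] := MVT_segment ab (fun x xab => Hd x (lt_trans a0 (itv_oo_l xab))) (cont _ _ a b a0 Hd).
  have c0 : 0 < c by apply: lt_le_trans a0 (itv_cc_l cab).
  rewrite -subr_ge0 E; apply: mulr_ge0; [exact: Hd2|by rewrite subr_ge0].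
move=> u u0; case: (leP 1 u) => u1.
  have [c cab E] := MVT_segment u1 (fun x xab => Hp x (lt_trans ltr01 (itv_oo_l xab))) (cont _ _ 1 u ltr01 Hp).
  have c1 : 1 <= c by apply: (itv_cc_l cab).
  rewrite -subr_ge0 opprD addrA E -mulrBl; apply: mulr_ge0; last by rewrite subr_ge0.
  by rewrite subr_ge0; apply: mono.
have u1' : u <= 1 by apply: ltW.
have [c cab E] := MVT_segment u1' (fun x xab => Hp x (lt_trans u0 (itv_oo_l xab))) (cont _ _ u 1 u0 Hp).
have c0 : 0 < c by apply: lt_le_trans u0 (itv_cc_l cab).
have c1 : c <= 1 by apply: (itv_cc_r cab).
have : d1 c <= d1 1 by apply: mono.
have : phi u = phi 1 - d1 c * (1 - u) by rewrite -E; ring.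
move=> ->; move=> h; rewrite -subr_ge0.
have -> : phi 1 - d1 c * (1 - u) - (phi 1 + d1 1 * (u - 1)) = (d1 1 - d1 c) * (1 - u) by ring.
by apply: mulr_ge0; rewrite subr_ge0 // ltW.
Qed.
Lemma scE (R : realType) (a b : R) : a *: b = a * b. Proof. by []. Qed.

Section Calc.
Variables (R : realType) (f f1 f2 g g1 g2 : R -> R).
Hypothesis f11 : f 1 = 1.
Hypothesis Hf : forall x : R, 0 < x -> is_derive x 1 f (f1 x).
Hypothesis Hf1 : forall x : R, 0 < x -> is_derive x 1 f1 (f2 x).
Hypothesis Hg : forall x : R, 0 < x -> is_derive x 1 g (g1 x).
Hypothesis Hg1 : forall x : R, 0 < x -> is_derive x 1 g1 (g2 x).
Hypothesis Hgdef : forall x : R, 0 < x -> g x = x ^+ 2 * f2 x.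
Hypothesis Hcond : forall x a : R, 0 < x -> 0 < a -> x ^+ 2 * g2 x - g a * g (x / a) <= 0.

Lemma stage1 (u v : R) : 0 < u -> 0 < v ->
  0 <= g u * (f v - f1 1 * (v - 1)) - g (u * v) + (v - 1) * (u * g1 u).
Proof.
move=> u0 v0.
pose chi := cst (g u) * (f - cst (f1 1) * (id - cst 1)) - (g \o ( *%R u))
   + (id - cst 1) * cst (u * g1 u).
pose d1 := cst (g u) * (f1 - cst (f1 1)) - cst u * (g1 \o ( *%R u)) + cst (u * g1 u).
pose d2 := fun v : R => g u * f2 v - u * (u * g2 (u * v)).
have D1 : forall x : R, 0 < x -> is_derive x 1 chi (d1 x).
  move=> x x0; have := Hf x0; have := Hg (mulr_gt0 u0 x0) => A B.
  apply: is_derive_eq; rewrite !scE /d1 /cst /= !fctE /=; ring.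
have D2 : forall x : R, 0 < x -> is_derive x 1 d1 (d2 x).
  move=> x x0; have := Hf1 x0; have := Hg1 (mulr_gt0 u0 x0) => A B.
  apply: is_derive_eq; rewrite !scE /d2 /cst /= !fctE /=; ring.
have D3 : forall x : R, 0 < x -> 0 <= d2 x.
  move=> x x0; rewrite /d2.
  have ux0 := mulr_gt0 u0 x0.
  have E : u * x / u = x by rewrite mulrAC divff ?mul1r // gt_eqF.
  have := Hcond ux0 u0; rewrite E (Hgdef x0) => h.
  have E2 : x ^+ 2 * (g u * f2 x - u * (u * g2 (u * x))) = - ((u * x) ^+ 2 * g2 (u * x) - g u * (x ^+ 2 * f2 x)) by ring.
  have : 0 <= x ^+ 2 * (g u * f2 x - u * (u * g2 (u * x))) by rewrite E2 oppr_ge0.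
  by rewrite pmulr_rge0 // exprn_gt0.
have := L2 D1 D2 D3 v0.
have -> : chi 1 = g u * (f 1 - f1 1 * (1 - 1)) - g (u * 1) + (1 - 1) * (u * g1 u) by [].
have -> : d1 1 = g u * (f1 1 - f1 1) - u * g1 (u * 1) + u * g1 u by [].
have -> : chi v = g u * (f v - f1 1 * (v - 1)) - g (u * v) + (v - 1) * (u * g1 u) by [].
have -> : g u * (f 1 - f1 1 * (1 - 1)) - g (u * 1) + (1 - 1) * (u * g1 u) = 0 by rewrite f11 mulr1; ring.
have -> : g u * (f1 1 - f1 1) - u * g1 (u * 1) + u * g1 u = 0 by rewrite mulr1; ring.
by rewrite mul0r add0r.
Qed.
End Calc.
Lemma is_derive_inv (R : realType) (x : R) : x != 0 ->
  is_derive x 1 (@GRing.inv R) (- x ^- 2).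
Proof.
move=> x0.
have := @is_deriveV R id x 1 1 x0 (is_derive_id x 1).
move=> h; apply: is_derive_eq.
exact: mulr1.
Qed.

Section Calc2.
Variables (R : realType) (f f1 f2 g g1 g2 : R -> R).
Hypothesis f11 : f 1 = 1.
Hypothesis Hf : forall x : R, 0 < x -> is_derive x 1 f (f1 x).
Hypothesis Hf1 : forall x : R, 0 < x -> is_derive x 1 f1 (f2 x).
Hypothesis Hg : forall x : R, 0 < x -> is_derive x 1 g (g1 x).
Hypothesis Hg1 : forall x : R, 0 < x -> is_derive x 1 g1 (g2 x).
Hypothesis Hgdef : forall x : R, 0 < x -> g x = x ^+ 2 * f2 x.
Hypothesis Hcond : forall x a : R, 0 < x -> 0 < a -> x ^+ 2 * g2 x - g a * g (x / a) <= 0.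

Lemma stage2 (u v : R) : 0 < u -> 0 < v ->
  0 <= f u * f v - f (u * v) + (v - 1) * (u * f1 u - f1 1 * f u)
       - (u - 1) * (f1 1 * f v - v * f1 v + (v - 1) * (f1 1 + g 1 - f1 1 * f1 1)).
Proof.
move=> u0 v0.
pose phi := f * cst (f v) - (f \o ( *%R v)) + cst (v - 1) * (id * f1 - cst (f1 1) * f).
pose d1 := f1 * cst (f v) - cst v * (f1 \o ( *%R v))
   + cst (v - 1) * (f1 + g * (@GRing.inv R) - cst (f1 1) * f1).
pose d2 := fun u : R => f2 u * f v - v * (v * f2 (v * u))
   + (v - 1) * (f2 u + (g u * (- u ^- 2) + u^-1 * g1 u) - f1 1 * f2 u).
have D1 : forall x : R, 0 < x -> is_derive x 1 phi (d1 x).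
  move=> x x0; have := Hf x0; have := Hf1 x0; have := Hf (mulr_gt0 v0 x0) => A B C.
  apply: is_derive_eq; rewrite !scE /d1 /cst /= !fctE /= (Hgdef x0).
  by field; rewrite gt_eqF.
have D2 : forall x : R, 0 < x -> is_derive x 1 d1 (d2 x).
  move=> x x0; have := Hf1 x0; have := Hg x0; have := Hf1 (mulr_gt0 v0 x0).
  have := is_derive_inv (lt0r_neq0 x0) => A B C D.
  apply: is_derive_eq; rewrite !scE /d2 /cst /= !fctE /=; ring.
have D3 : forall x : R, 0 < x -> 0 <= d2 x.
  move=> x x0; rewrite /d2.
  have := stage1 f11 Hf Hf1 Hg Hg1 Hgdef Hcond x0 v0.
  have E : x ^+ 2 * (f2 x * f v - v * (v * f2 (v * x)) +
     (v - 1) * (f2 x + (g x * - x ^- 2 + x^-1 * g1 x) - f1 1 * f2 x))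
   = g x * (f v - f1 1 * (v - 1)) - g (x * v) + (v - 1) * (x * g1 x).
    rewrite (Hgdef x0) (Hgdef (mulr_gt0 x0 v0)) (mulrC v x).
    by field; rewrite gt_eqF.
  rewrite -E => h.
  by rewrite -(pmulr_rge0 _ (exprn_gt0 2 x0)).
have := L2 D1 D2 D3 u0.
have -> : phi 1 = f 1 * f v - f (v * 1) + (v - 1) * (1 * f1 1 - f1 1 * f 1) by [].
have -> : d1 1 = f1 1 * f v - v * f1 (v * 1) + (v - 1) * (f1 1 + g 1 * 1^-1 - f1 1 * f1 1) by [].
have -> : phi u = f u * f v - f (v * u) + (v - 1) * (u * f1 u - f1 1 * f u) by [].
rewrite f11 mulr1 invr1 mulr1 mul1r mulr1 (mulrC v u).
have -> : f v - f v + (v - 1) * (1 * f1 1 - f1 1) = 0 by ring.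
by rewrite add0r [_ * (u - 1)]mulrC subr_ge0.
Qed.
End Calc2.
Section Sums.
Variable R : realType.

Lemma sum_absc (T : finType) (p q : T -> R) : abs_cont p q ->
  \sum_(x | q x != 0) p x = \sum_x p x.
Proof.
move=> H; rewrite [RHS](bigID (fun x => q x != 0)) /= [X in _ = _ + X]big1 ?addr0 //.
by move=> x /negPn/eqP /H.
Qed.

Lemma sum_qq (T : finType) (q : T -> R) : \sum_(x | q x != 0) q x = \sum_x q x.
Proof. by apply: sum_absc. Qed.

Lemma sum_dev (T : finType) (p q : T -> R) : is_distr p -> is_distr q -> abs_cont p q ->
  \sum_(x | q x != 0) q x * (p x / q x - 1) = 0.
Proof.
move=> [_ Sp] [_ Sq] H.
rewrite (eq_bigr (fun x => p x - q x)); last first.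
  by move=> x qx; rewrite mulrBr mulr1 mulrCA divff // mulr1.
by rewrite sumrB sum_absc // sum_qq Sp Sq subrr.
Qed.

Definition pf (T1 T2 : finType) (p1 : T1 -> R) (p2 : T2 -> R) : T1 * T2 -> R :=
  fun z => p1 z.1 * p2 z.2.

Lemma fdiv_prod (T1 T2 : finType) (h : R -> R) (p1 q1 : T1 -> R) (p2 q2 : T2 -> R) :
  fdiv h (pf p1 p2) (pf q1 q2) =
  \sum_(x | q1 x != 0) \sum_(y | q2 y != 0) q1 x * q2 y * h (p1 x / q1 x * (p2 y / q2 y)).
Proof.
rewrite pair_big_dep /fdiv; apply: eq_big => [z|z].
  by rewrite /pf mulf_eq0 negb_or.
rewrite /pf mulf_eq0 negb_or => /andP[h1 h2].
by congr (_ * h _); field; rewrite h1 h2.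
Qed.

Definition gd (T : finType) (p q : T -> R) :=
  [/\ is_distr p, is_distr q, abs_cont p q & forall x, q x != 0 -> 0 < p x].

Lemma distr_prod (T1 T2 : finType) (p1 : T1 -> R) (p2 : T2 -> R) :
  is_distr p1 -> is_distr p2 -> is_distr (pf p1 p2).
Proof.
move=> [h1 s1] [h2 s2]; split.
  by move=> z; rewrite /pf mulr_ge0.
rewrite /pf -(pair_bigA _ (fun i j => p1 i * p2 j)) /=.
transitivity ((\sum_i p1 i) * (\sum_j p2 j)); last by rewrite s1 s2 mulr1.
rewrite mulr_suml; apply: eq_bigr => i _.
by rewrite mulr_sumr.
Qed.

Lemma gd_prod (T1 T2 : finType) (p1 q1 : T1 -> R) (p2 q2 : T2 -> R) :
  gd p1 q1 -> gd p2 q2 -> gd (pf p1 p2) (pf q1 q2).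
Proof.
move=> [d1 e1 a1 h1] [d2 e2 a2 h2]; split.
- exact: distr_prod.
- exact: distr_prod.
- move=> z; rewrite /pf => /eqP; rewrite mulf_eq0 => /orP[/eqP/a1 ->|/eqP/a2 ->].
    by rewrite mul0r.
  by rewrite mulr0.
- move=> z; rewrite /pf mulf_eq0 negb_or => /andP[/h1 k1 /h2 k2].
  exact: mulr_gt0.
Qed.

End Sums.
Section Tens.
Variable R : realType.

Lemma gd_ratio (T : finType) (p q : T -> R) : gd p q -> forall x, q x != 0 -> 0 < p x / q x.
Proof.
move=> [_ [hq _] _ hp] x qx; apply: divr_gt0; first exact: hp.
by rewrite lt_def qx hq.
Qed.

Lemma tensor (T1 T2 : finType) (f A B : R -> R) (p1 q1 : T1 -> R) (p2 q2 : T2 -> R) :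
  (forall u v, 0 < u -> 0 < v -> 0 <= f u * f v - f (u * v) + (v - 1) * B u - (u - 1) * A v) ->
  gd p1 q1 -> gd p2 q2 -> fdiv f (pf p1 p2) (pf q1 q2) <= fdiv f p1 q1 * fdiv f p2 q2.
Proof.
move=> PW g1 g2.
have r1 := gd_ratio g1; have r2 := gd_ratio g2.
case: g1 => d1 e1 a1 _; case: g2 => d2 e2 a2 _.
have [hq1 _] := e1; have [hq2 _] := e2.
rewrite fdiv_prod /fdiv.
apply: (@le_trans _ _ (\sum_(x | q1 x != 0) \sum_(y | q2 y != 0)
   (q1 x * f (p1 x / q1 x) * (q2 y * f (p2 y / q2 y)) + q1 x * q2 y *
     ((p2 y / q2 y - 1) * B (p1 x / q1 x) - (p1 x / q1 x - 1) * A (p2 y / q2 y))))).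
  apply: ler_sum => x hx; apply: ler_sum => y hy.
  rewrite -subr_ge0.
  set u := p1 x / q1 x; set v := p2 y / q2 y.
  have -> : q1 x * f u * (q2 y * f v) + q1 x * q2 y * ((v - 1) * B u - (u - 1) * A v) -
      q1 x * q2 y * f (u * v) =
    q1 x * q2 y * (f u * f v - f (u * v) + (v - 1) * B u - (u - 1) * A v) by ring.
  by apply: mulr_ge0; [apply: mulr_ge0|apply: PW; [apply: r1|apply: r2]].
have S2 := sum_dev d2 e2 a2.
have S1 := sum_dev d1 e1 a1.
rewrite le_eqVlt; apply/orP; left; apply/eqP.
rewrite mulr_suml.
transitivity (\sum_(x | q1 x != 0) (q1 x * f (p1 x / q1 x) * \sum_(y | q2 y != 0) q2 y * f (p2 y / q2 y)
   - (\sum_(y | q2 y != 0) q2 y * A (p2 y / q2 y)) * (q1 x * (p1 x / q1 x - 1)))).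
  apply: eq_bigr => x hx.
  have -> : q1 x * f (p1 x / q1 x) * \sum_(y | q2 y != 0) q2 y * f (p2 y / q2 y)
     - (\sum_(y | q2 y != 0) q2 y * A (p2 y / q2 y)) * (q1 x * (p1 x / q1 x - 1)) =
     q1 x * f (p1 x / q1 x) * \sum_(y | q2 y != 0) q2 y * f (p2 y / q2 y)
     + q1 x * B (p1 x / q1 x) * \sum_(y | q2 y != 0) q2 y * (p2 y / q2 y - 1)
     - (\sum_(y | q2 y != 0) q2 y * A (p2 y / q2 y)) * (q1 x * (p1 x / q1 x - 1)).
    by rewrite S2 mulr0 addr0.
  rewrite !mulr_sumr mulr_suml -big_split -sumrB /=; apply: eq_bigr => y hy; ring.
by rewrite sumrB -mulr_sumr S1 mulr0 subr0.

Qed.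
End Tens.
Section PB.
Variable R : realType.

Lemma gd_ratio_ge0 (T : finType) (p q : T -> R) : gd p q -> forall x, 0 <= p x / q x.
Proof.
move=> [[hp _] [hq _] _ _] x; exact: divr_ge0.
Qed.

Lemma fdiv_ge0 (T : finType) (h : R -> R) (p q : T -> R) :
  (forall t, 0 <= t -> 0 <= h t) -> gd p q -> 0 <= fdiv h p q.
Proof.
move=> H g; have := gd_ratio_ge0 g; case: g => _ [hq _] _ _ r.
by apply: sumr_ge0 => x _; apply: mulr_ge0 => //; apply: H.
Qed.

Lemma fdiv_mono (T : finType) (h k : R -> R) (p q : T -> R) :
  (forall t, 0 <= t -> h t <= k t) -> gd p q -> fdiv h p q <= fdiv k p q.
Proof.
move=> H g; have := gd_ratio_ge0 g; case: g => _ [hq _] _ _ r.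
by apply: ler_sum => x _; apply: ler_wpM2l => //; apply: H.
Qed.

Lemma fdivZ (T : finType) (c : R) (h : R -> R) (p q : T -> R) :
  c * fdiv h p q = fdiv (fun t => c * h t) p q.
Proof. by rewrite /fdiv mulr_sumr; apply: eq_bigr => x _; ring. Qed.

Lemma Mprod (s : R) (T1 T2 : finType) (p1 q1 : T1 -> R) (p2 q2 : T2 -> R) :
  gd p1 q1 -> gd p2 q2 ->
  fdiv (fun t => t `^ s) (pf p1 p2) (pf q1 q2) =
  fdiv (fun t => t `^ s) p1 q1 * fdiv (fun t => t `^ s) p2 q2.
Proof.
move=> g1 g2; have r1 := gd_ratio_ge0 g1; have r2 := gd_ratio_ge0 g2.
rewrite fdiv_prod /fdiv mulr_suml; apply: eq_bigr => x _.
rewrite mulr_sumr; apply: eq_bigr => y _.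
by rewrite powRM //; ring.
Qed.

Lemma power_bound (f A B : R -> R) (s c : R) (T : finType) (p q : T -> R) :
  (forall u v, 0 < u -> 0 < v -> 0 <= f u * f v - f (u * v) + (v - 1) * B u - (u - 1) * A v) ->
  (forall t, 0 <= t -> c * t `^ s <= f t) -> f 1 = 1 -> 0 <= c -> gd p q ->
  forall n : nat, c * (fdiv (fun t => t `^ s) p q) ^+ n <= (fdiv f p q) ^+ n.
Proof.
move=> PW Hc f11 c0 g.
have fge0 : forall t, 0 <= t -> 0 <= f t.
  by move=> t t0; apply: le_trans (Hc t t0); apply: mulr_ge0 => //; exact: powR_ge0.
have F0 : 0 <= fdiv f p q by apply: fdiv_ge0.
suff H : forall n : nat, exists (T' : finType) (p' q' : T' -> R),
   [/\ gd p' q', fdiv f p' q' <= (fdiv f p q) ^+ n &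
       fdiv (fun t => t `^ s) p' q' = (fdiv (fun t => t `^ s) p q) ^+ n].
  move=> n; have [T' [p' [q' [g' h1 h2]]]] := H n.
  rewrite -h2; apply: le_trans h1.
  by rewrite fdivZ; apply: fdiv_mono.
elim=> [|n [T' [p' [q' [g' h1 h2]]]]].
  exists 'I_1, (fun _ => 1), (fun _ => 1).
  have S1 : \sum_(x : 'I_1) (1 : R) = 1 by rewrite big_ord1.
  split.
  - split; [split=> //|split=> //|by move=> x /eqP; rewrite oner_eq0|by move=> x _].
  - by rewrite expr0 /fdiv big_mkcond big_ord1 oner_neq0 /= divr1 f11 mulr1.
  - by rewrite expr0 /fdiv big_mkcond big_ord1 oner_neq0 /= divr1 powR1 mulr1.
exists (T * T')%type, (pf p p'), (pf q q'); split.
- exact: gd_prod.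
- apply: le_trans (tensor PW g g') _.
  by rewrite exprS; apply: ler_wpM2l.
- by rewrite Mprod // h2 exprS.
Qed.
End PB.
Section ML.
Variable R : realType.

Lemma bern (h : R) (n : nat) : 0 <= h -> 1 + n%:R * h <= (1 + h) ^+ n.
Proof.
move=> h0; elim: n => [|n IH]; first by rewrite mul0r addr0 expr0.
rewrite exprS.
apply: (@le_trans _ _ ((1 + h) * (1 + n%:R * h))); last first.
  by apply: ler_wpM2l => //; apply: addr_ge0.
have -> : (1 + h) * (1 + n%:R * h) = 1 + n.+1%:R * h + n%:R * h * h.
  by rewrite -addn1 natrD; ring.
by rewrite lerDl mulr_ge0 // mulr_ge0.
Qed.

Lemma lim_arg (c M F : R) : 0 < c -> 0 < M -> 0 <= F ->
  (forall n : nat, c * M ^+ n <= F ^+ n) -> M <= F.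
Proof.
move=> c0 M0 F0 H; rewrite leNgt; apply/negP => FM.
have F0' : 0 < F.
  rewrite lt_def F0 andbT; apply/negP => /eqP F00.
  have := H 1%N; rewrite !expr1 F00 => h.
  by have := mulr_gt0 c0 M0; rewrite ltNge h.
pose h := M / F - 1.
have h0 : 0 < h by rewrite subr_gt0 ltr_pdivlMr // mul1r.
pose n := Num.Def.archi_bound ((c * h)^-1).
have cp : 0 <= (c * h)^-1 by rewrite invr_ge0 ltW // mulr_gt0.
have nb := archi_boundP cp.
have := H n.
have -> : M ^+ n = (1 + h) ^+ n * F ^+ n.
  by rewrite /h addrC subrK -exprMn divfK // gt_eqF.
rewrite mulrA -[X in _ <= X]mul1r ler_pM2r ?exprn_gt0 // => k.
have := bern n (ltW h0) => b.
have : c * (1 + n%:R * h) <= 1.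
  by apply: le_trans k; apply: ler_wpM2l => //; exact: ltW.
rewrite mulrDr mulr1 => k2.
have k3 : c * (n%:R * h) <= 1 - c by rewrite lerBrDl.
have k4 : c * (n%:R * h) < 1 by apply: le_lt_trans k3 _; rewrite ltrBlDr ltrDl.
have : (c * h)^-1 * (c * h) < n%:R * (c * h) by rewrite ltr_pM2r // mulr_gt0.
rewrite mulVf ?gt_eqF ?mulr_gt0 // => k5.
have : n%:R * (c * h) = c * (n%:R * h) by ring.
by move=> E; move: k5; rewrite E => k5; have := lt_trans k5 k4; rewrite ltxx.
Qed.
End ML.
Section MF.
Variable R : realType.

Lemma M_gt0 (s : R) (T : finType) (p q : T -> R) : gd p q ->
  0 < fdiv (fun t => t `^ s) p q.
Proof.
move=> g; have r := gd_ratio g; have r0 := gd_ratio_ge0 g.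
case: g => [[hp sp] [hq _] a _].
case: (boolP [exists x, p x != 0]) => [/existsP [x px]|/existsPn H]; last first.
  move: sp; rewrite big1 => [/eqP|x _]; first by rewrite eq_sym oner_eq0.
  by have := H x; rewrite negbK => /eqP.
have qx : q x != 0 by apply/negP => /eqP /a /eqP; rewrite (negbTE px).
rewrite /fdiv (bigD1 x) //=.
apply: (@lt_le_trans _ _ (q x * (p x / q x) `^ s)).
  by apply: mulr_gt0; [rewrite lt_def qx hq|apply: powR_gt0; apply: r].
rewrite lerDl; apply: sumr_ge0 => y _; apply: mulr_ge0 => //; exact: powR_ge0.
Qed.

Lemma bern_down (e : R) (n : nat) : 0 <= e -> e <= 1 -> 1 - n%:R * e <= (1 - e) ^+ n.
Proof.
move=> e0 e1; elim: n => [|n IH]; first by rewrite mul0r subr0 expr0.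
rewrite exprS.
apply: (@le_trans _ _ ((1 - e) * (1 - n%:R * e))); last first.
  by apply: ler_wpM2l => //; rewrite subr_ge0.
have -> : (1 - e) * (1 - n%:R * e) = 1 - n.+1%:R * e + n%:R * e * e.
  by rewrite -addn1 natrD; ring.
by rewrite lerDl mulr_ge0 // mulr_ge0.
Qed.

Lemma M_le_F (f A B : R -> R) (s c : R) (N : nat) (T : finType) (p q : T -> R) :
  (forall u v, 0 < u -> 0 < v -> 0 <= f u * f v - f (u * v) + (v - 1) * B u - (u - 1) * A v) ->
  (forall t, 0 <= t -> c * t `^ s <= f t) -> f 1 = 1 -> 0 < c -> convex_nonneg f ->
  0 <= s -> s <= N%:R ->
  is_distr p -> is_distr q -> abs_cont p q ->
  fdiv (fun t => t `^ s) p q <= fdiv f p q.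
Proof.
move=> PW Hc f11 c0 Hconv s0 sN dp dq a.
have fge0 : forall t, 0 <= t -> 0 <= f t.
  by move=> t t0; apply: le_trans (Hc t t0); apply: mulr_ge0 => //; [exact: ltW|exact: powR_ge0].
have [hp sp] := dp; have [hq sq] := dq.
have r0 : forall x, 0 <= p x / q x by move=> x; exact: divr_ge0.
have F0 : 0 <= fdiv f p q by apply: sumr_ge0 => x _; apply: mulr_ge0 => //; apply: fge0.
have M0 : 0 <= fdiv (fun t => t `^ s) p q.
  by apply: sumr_ge0 => x _; apply: mulr_ge0 => //; apply: powR_ge0.
have key : forall e : R, 0 < e -> e < 1 ->
    (1 - N%:R * e) * fdiv (fun t => t `^ s) p q <= (1 - e) * fdiv f p q + e.
  move=> e e0 e1.
  pose pe := fun x => (1 - e) * p x + e * q x.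
  have ge : gd pe q.
    split => //.
    - split; first by move=> x; apply: addr_ge0; apply: mulr_ge0 => //; [rewrite subr_ge0 ltW|exact: ltW].
      by rewrite /pe big_split /= -!mulr_sumr sp sq !mulr1 subrK.
    - by move=> x qx0; rewrite /pe (a x qx0) qx0 !mulr0 addr0.
    - move=> x qx; rewrite /pe; apply: ltr_wpDl.
        by apply: mulr_ge0 => //; rewrite subr_ge0 ltW.
      by apply: mulr_gt0 => //; rewrite lt_def qx hq.
  have ratio : forall x, q x != 0 -> pe x / q x = (1 - e) * (p x / q x) + e.
    by move=> x qx; rewrite /pe; field.
  have ML := lim_arg c0 (M_gt0 s ge) (fdiv_ge0 fge0 ge) (power_bound PW Hc f11 (ltW c0) ge).
  have up : fdiv f pe q <= (1 - e) * fdiv f p q + e.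
    have -> : (1 - e) * fdiv f p q + e =
        \sum_(x | q x != 0) q x * ((1 - e) * f (p x / q x) + e * f 1).
      rewrite (eq_bigr (fun x => (1 - e) * (q x * f (p x / q x)) + e * q x)); last first.
        by move=> x _; rewrite f11; ring.
      by rewrite big_split /= -!mulr_sumr sum_qq sq mulr1.
    apply: ler_sum => x qx; rewrite ratio //; apply: ler_wpM2l => //.
    have E1 : 1 - (1 - e) = e by ring.
    have := Hconv (p x / q x) 1 (1 - e) (r0 x) ler01.
    rewrite E1 mulr1; apply; first by rewrite subr_ge0 ltW.
    by rewrite lerBlDr lerDl ltW.
  have lo : (1 - N%:R * e) * fdiv (fun t => t `^ s) p q <= fdiv (fun t => t `^ s) pe q.
    rewrite /fdiv mulr_sumr; apply: ler_sum => x qx; rewrite ratio //.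
    rewrite mulrCA; apply: ler_wpM2l => //.
    apply: (@le_trans _ _ (((1 - e) * (p x / q x)) `^ s)); last first.
      have pe0 : 0 <= 1 - e by rewrite subr_ge0 ltW.
      apply: ge0_ler_powR => //; first by rewrite nnegrE; apply: mulr_ge0 => //; exact: r0.
        by rewrite nnegrE; apply: addr_ge0; [apply: mulr_ge0 => //; exact: r0|exact: ltW].
      by rewrite lerDl ltW.
    rewrite [X in _ <= X]powRM; last 2 first.
      by rewrite subr_ge0 ltW.
      exact: r0.
    apply: ler_wpM2r; first exact: powR_ge0.
    apply: (@le_trans _ _ ((1 - e) ^+ N)); first by apply: bern_down; rewrite ltW.
    rewrite -powR_mulrn; last by rewrite subr_ge0 ltW.
    have ha : 0 < 1 - e <= 1 by rewrite subr_gt0 e1 lerBlDr lerDl ltW.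
    exact: (ger_powR ha sN).
  exact: le_trans lo (le_trans ML up).
apply/ler_addgt0Pr => d d0.
set M := fdiv _ p q in M0 key *; set F := fdiv f p q in F0 key *.
pose K := N%:R * M + 1.
have K0 : 0 < K by rewrite /K ltr_wpDl // mulr_ge0.
pose ep := d / (d + K).
have ep0 : 0 < ep by rewrite divr_gt0 // addr_gt0.
have ep1 : ep < 1.
  by rewrite /ep ltr_pdivrMr ?mul1r ?ltrDl // addr_gt0.
have epK : ep * K <= d.
  by rewrite /ep mulrAC ler_pdivrMr ?ler_pM2l ?lerDr ?ltW // addr_gt0.
have := key ep ep0 ep1.
have epF : 0 <= ep * F by rewrite mulr_ge0 // ltW.
rewrite /K in epK.
nra.
Qed.
End MF.
Section KLp.
Variable R : realType.

Lemma ln_le_sub1 (x : R) : 0 < x -> ln x <= x - 1.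
Proof.
move=> x0; have := @le_ln1Dx R (x - 1).
have -> : 1 + (x - 1) = x by ring.
by apply; lra.
Qed.

Lemma KL_le (s : R) (T : finType) (p q : T -> R) : 1 < s ->
  is_distr p -> is_distr q -> abs_cont p q ->
  0 < fdiv (fun t => t `^ s) p q /\ (s - 1) * KL p q <= ln (fdiv (fun t => t `^ s) p q).
Proof.
move=> s1 [hp sp] [hq sq] a.
have s0 : 0 < s by apply: lt_trans s1.
have qpos : forall x, p x != 0 -> 0 < q x.
  move=> x px; rewrite lt_def hq andbT; apply/negP => /eqP /a /eqP.
  by rewrite (negbTE px).
have ppos : forall x, p x != 0 -> 0 < p x by move=> x px; rewrite lt_def px hp.
have rpos : forall x, p x != 0 -> 0 < p x / q x.
  by move=> x px; apply: divr_gt0; [apply: ppos|apply: qpos].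
pose y := fun x => (p x / q x) `^ (s - 1).
have ypos : forall x, p x != 0 -> 0 < y x by move=> x px; apply: powR_gt0; apply: rpos.
have EM : fdiv (fun t => t `^ s) p q = \sum_(x | p x != 0) p x * y x.
  rewrite /fdiv big_mkcond [RHS]big_mkcond; apply: eq_bigr => x _.
  case: (boolP (p x != 0)) => px.
    have qx : q x != 0 by rewrite gt_eqF ?qpos.
    rewrite qx /y -(mulr_powRB1 (ltW (rpos x px)) s0) mulrA.
    by rewrite mulrCA divff // mulr1.
  move: px; rewrite negbK => /eqP ->; rewrite mul0r powR0; last by rewrite gt_eqF.
  by rewrite mulr0; case: (q x != 0).
have Sp : \sum_(x | p x != 0) p x = 1 by rewrite sum_qq.
have S0 : 0 < \sum_(x | p x != 0) p x * y x.
  case: (boolP [exists x, p x != 0]) => [/existsP [x px]|/existsPn H]; last first.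
    move: sp; rewrite big1 => [/eqP|x _]; first by rewrite eq_sym oner_eq0.
    by have := H x; rewrite negbK => /eqP.
  rewrite (bigD1 x) //=; apply: (@lt_le_trans _ _ (p x * y x)).
    by apply: mulr_gt0; [apply: ppos|apply: ypos].
  rewrite lerDl; apply: sumr_ge0 => z /andP[pz _]; apply: mulr_ge0 => //; exact: ltW (ypos z pz).
split; first by rewrite EM.
rewrite EM; set S := \sum_(x | p x != 0) p x * y x in S0 *.
rewrite -subr_ge0.
have J : \sum_(x | p x != 0) p x * ln (y x / S) <= \sum_(x | p x != 0) p x * (y x / S - 1).
  apply: ler_sum => x px; apply: ler_wpM2l => //; apply: ln_le_sub1.
  by apply: divr_gt0 => //; apply: ypos.
have R1 : \sum_(x | p x != 0) p x * (y x / S - 1) = 0.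
  rewrite (eq_bigr (fun x => (p x * y x) / S - p x)); last by move=> x _; ring.
  by rewrite sumrB -mulr_suml divff ?gt_eqF // Sp subrr.
have L1 : \sum_(x | p x != 0) p x * ln (y x / S) = (s - 1) * KL p q - ln S.
  rewrite (eq_bigr (fun x => (s - 1) * (p x * ln (p x / q x)) - p x * ln S)); last first.
    move=> x px; rewrite ln_div; last 2 first.
        by rewrite posrE ypos.
      by rewrite posrE.
    by rewrite /y ln_powR; ring.
  by rewrite sumrB -mulr_sumr -mulr_suml Sp mul1r.
by move: J; rewrite R1 L1 subr_le0 -subr_ge0.
Qed.
End KLp.
Theorem theorem8 (R : realType) (f : R -> R) (c s : R) :
  convex_nonneg f ->
  f 1 = 1 ->
  (forall x : R, 0 < x ->
     [/\ derivable f x 1, derivable (derive1 f) x 1,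
         derivable (gfun f) x 1 & derivable (derive1 (gfun f)) x 1]) ->
  (forall x : R, 0 < x -> 0 <= gfun f x) ->
  (forall x alpha : R, 0 < x -> 0 < alpha ->
     x ^+ 2 * derive1 (derive1 (gfun f)) x - gfun f alpha * gfun f (x / alpha) <= 0) ->
  0 < c -> 1 < s ->
  (forall x : R, 0 <= x -> c * x `^ s <= f x) ->
  forall (T : finType) (p q : T -> R),
    is_distr p -> is_distr q -> abs_cont p q ->
    KL p q <= ln (1 + fdiv (fun t => f t - 1) p q) / (s - 1).
Proof.
move=> Hconv f11 Hder _ Hcond c0 s1 Hc T p q dp dq a.
have isd : forall (h : R -> R) (x : R), derivable h x 1 -> is_derive x 1 h (derive1 h x).
  by move=> h x d; rewrite derive1E; exact: derivableP.
have Hf : forall x : R, 0 < x -> is_derive x 1 f (derive1 f x).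
  by move=> x x0; have [d _ _ _] := Hder x x0; exact: isd.
have Hf1 : forall x : R, 0 < x -> is_derive x 1 (derive1 f) (derive1 (derive1 f) x).
  by move=> x x0; have [_ d _ _] := Hder x x0; exact: isd.
have Hg : forall x : R, 0 < x -> is_derive x 1 (gfun f) (derive1 (gfun f) x).
  by move=> x x0; have [_ _ d _] := Hder x x0; exact: isd.
have Hg1 : forall x : R, 0 < x -> is_derive x 1 (derive1 (gfun f)) (derive1 (derive1 (gfun f)) x).
  by move=> x x0; have [_ _ _ d] := Hder x x0; exact: isd.
have Hgdef : forall x : R, 0 < x -> gfun f x = x ^+ 2 * derive1 (derive1 f) x by [].
have PW := stage2 f11 Hf Hf1 Hg Hg1 Hgdef Hcond.
have s0 : 0 <= s by apply: ltW; apply: lt_trans s1.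
have sN := ltW (archi_boundP s0).
have MF := M_le_F PW Hc f11 c0 Hconv s0 sN dp dq a.
have [M0 KLi] := KL_le s1 dp dq a.
have -> : 1 + fdiv (fun t => f t - 1) p q = fdiv f p q.
  have [hq sq] := dq.
  rewrite /fdiv (eq_bigr (fun x => q x * f (p x / q x) - q x)); last by move=> x _; ring.
  by rewrite sumrB sum_qq sq addrC subrK.
rewrite ler_pdivlMr ?subr_gt0 // mulrC; apply: le_trans KLi _.
by rewrite ler_ln ?posrE //; apply: lt_le_trans MF.
Qed.
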